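(* For every $n\ge 6$ there exist two non-isomorphic graphs $G,H$ on $n$ vertices and a set $\mathcal{F}$ consisting of a single graph of constant order such that, for every number of rounds, $1$-WL does not distinguish $G$ and $H$, while $1$-WL$_{\mathcal{F}}$ distinguishes $G$ and $H$ after a single round.
   Context: Graphs are finite, simple, undirected and unlabeled. $\mathsf{RELABEL}$ is a fixed injective map, shared by all graphs, from pairs (colour, finite multiset of colours) to natural numbers. $1$-WL: $C^1_0$ is constant; $C^1_t(v)=\mathsf{RELABEL}(C^1_{t-1}(v),\{\!\{C^1_{t-1}(u):u\in N(v)\}\!\})$. $1$-WL$_{\mathcal{F}}$: same update, but initial colour $C^{1,\mathcal{F}}_0(v)=(\ell_F(v))_{F\in\mathcal{F}}$ where $\ell_F(v)=1$ if $v$ lies in some vertex set $X$ whose induced subgraph $G[X]$ is isomorphic to $F$ and $0$ otherwise. An algorithm distinguishes $G$ and $H$ after round $t$ if for some round $s\le t$ there is a colour $c$ such that the number of vertices of colour $c$ at round $s$ differs between $G$ and $H$ (colourings computed with the shared $\mathsf{RELABEL}$). *)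

(* Defs.v *)
From mathcomp Require Import all_boot all_fingroup.
Set Implicit Arguments. Unset Strict Implicit. Unset Printing Implicit Defensive.

Definition simple_graph n (e : rel 'I_n) : Prop := symmetric e /\ irreflexive e.

Definition graph_iso n (e1 e2 : rel 'I_n) : Prop :=
  exists f : {perm 'I_n}, forall x y, e1 x y = e2 (f x) (f y).

(* RELABEL: injective map from pairs (colour, finite multiset of colours) to nat.
   A multiset is represented by a sequence, taken up to permutation. *)
Definition relabel_injective (RELABEL : nat -> seq nat -> nat) : Prop :=
  forall c s c' s', RELABEL c s = RELABEL c' s' <-> (c = c' /\ perm_eq s s').

Fixpoint wl_col (RELABEL : nat -> seq nat -> nat) n (e : rel 'I_n) (c0 : 'I_n -> nat)
    (t : nat) (v : 'I_n) : nat :=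
  match t with
  | 0 => c0 v
  | t'.+1 => RELABEL (wl_col RELABEL e c0 t' v)
                     [seq wl_col RELABEL e c0 t' u | u <- enum 'I_n & e v u]
  end.

(* l_F(v) = 1 iff v lies in a vertex set X with G[X] isomorphic to F, i.e. there is
   an injective map g : V(F) -> V(G) preserving adjacency and non-adjacency whose
   image contains v. *)
Definition in_induced_copy k (eF : rel 'I_k) n (e : rel 'I_n) (v : 'I_n) : bool :=
  [exists g : {ffun 'I_k -> 'I_n},
     [&& injectiveb g, [forall i, forall j, eF i j == e (g i) (g j)] & v \in codom g]].

Definition wl1 RELABEL n (e : rel 'I_n) := wl_col RELABEL e (fun _ => 0).

Definition wl1F RELABEL k (eF : rel 'I_k) n (e : rel 'I_n) :=
  wl_col RELABEL e (fun v => nat_of_bool (in_induced_copy eF e v)).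

Definition col_count n (col : 'I_n -> nat) (c : nat) : nat := #|[pred v | col v == c]|.

Definition distinguishes_after n (colG colH : nat -> 'I_n -> nat) (t : nat) : Prop :=
  exists s, s <= t /\ exists c, col_count (colG s) c <> col_count (colH s) c.

(* Main.v *)
Require Import Defs.
From mathcomp Require Import all_boot all_fingroup.
From mathcomp Require Import zify.

Definition cyc (a b x y : nat) : bool :=
  [&& a <= x < b, a <= y < b &
   [|| y == x.+1, x == y.+1, (x == a) && (y == b.-1) | (y == a) && (x == b.-1)]].

Lemma cyc_tri a b x y z : 4 <= b - a -> cyc a b x y -> cyc a b y z -> cyc a b x z -> False.
Proof. rewrite /cyc. lia. Qed.

Lemma count_card n (P : pred 'I_n) : count P (enum 'I_n) = #|P|.
Proof. rewrite -size_filter cardE /enum_mem -enumT /=.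
congr size. rewrite -filter_predI. apply: eq_filter => x /=. by rewrite andbT. Qed.

Lemma map_cst (T1 T2 : Type) (c : T2) (f : T1 -> T2) (s : seq T1) :
  (forall x, f x = c) -> map f s = nseq (size s) c.
Proof. move=> H; elim: s => //= x s ->; by rewrite H. Qed.

Fixpoint cst (R : nat -> seq nat -> nat) d t :=
  match t with 0 => 0 | t'.+1 => R (cst R d t') (nseq d (cst R d t')) end.

Lemma wl1_reg R n (e : rel 'I_n) d : (forall v, #|e v| = d) ->
  forall t v, wl1 R e t v = cst R d t.
Proof.
move=> Hd; elim=> [|t IH] v //=.
rewrite /wl1 /= in IH *.
rewrite IH (@map_cst _ _ _ _ _ IH) size_filter count_card Hd //.
Qed.

Lemma deg_cyc n a b (x : nat) (P : pred 'I_n) : a <= x < b -> 3 <= b - a -> b <= n ->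
  (forall u : 'I_n, P u = cyc a b x u) -> #|P| = 2.
Proof.
move=> Hx Hab Hbn HP.
set p := if x.+1 < b then x.+1 else a.
set q := if x == a then b.-1 else x.-1.
have Hp : p < n by rewrite /p; case: ifP; lia.
have Hq : q < n by rewrite /q; case: ifP; lia.
have Hpq : p != q by rewrite /p /q; case: ifP; case: ifP; lia.
have -> : #|P| = #|pred2 (Ordinal Hp) (Ordinal Hq)|.
  apply: eq_card => u; rewrite -topredE /= HP !inE -!val_eqE /= /cyc /p /q.
  case: ifP; case: ifP; lia.
rewrite card2; suff -> : (Ordinal Hp != Ordinal Hq) by [].
by rewrite -val_eqE.
Qed.

Section Main.
Variable n : nat.
Hypothesis Hn : 6 <= n.
Definition eG : rel 'I_n := fun x y => cyc 0 n x y.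
Definition eH : rel 'I_n := fun x y => cyc 0 3 x y || cyc 3 n x y.
Definition eF : rel 'I_3 := fun i j => i != j.

Lemma sG : simple_graph eG.
Proof. split; [move=> x y|move=> x]; rewrite /eG /cyc; lia. Qed.
Lemma sH : simple_graph eH.
Proof. split; [move=> x y|move=> x]; rewrite /eH /cyc; lia. Qed.
Lemma sF : simple_graph eF.
Proof. split; [move=> x y|move=> x]; rewrite /eF ?eqxx //; by rewrite eq_sym. Qed.

Lemma degG v : #|eG v| = 2.
Proof. move: (ltn_ord v) => Hv; apply: (@deg_cyc n 0 n v) => //; lia. Qed.
Lemma degH v : #|eH v| = 2.
Proof.
move: (ltn_ord v) => Hvn; case: (ltnP v 3) => Hv.
  apply: (@deg_cyc n 0 3 v) => //; try lia; move=> u; rewrite /eH /cyc; lia.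
apply: (@deg_cyc n 3 n v) => //; try lia; move=> u; rewrite /eH /cyc; lia.
Qed.

Lemma noG v : in_induced_copy eF eG v = false.
Proof.
rewrite /in_induced_copy; apply/negbTE/negP => /existsP [g /and3P [_ /forallP H _]].
pose j0 := @Ordinal 3 0 isT; pose j1 := @Ordinal 3 1 isT; pose j2 := @Ordinal 3 2 isT.
have h01 := H j0; move/forallP: h01 => /(_ j1) /eqP h01.
have h12 := H j1; move/forallP: h12 => /(_ j2) /eqP h12.
have h02 := H j0; move/forallP: h02 => /(_ j2) /eqP h02.
apply: (@cyc_tri 0 n (g j0) (g j1) (g j2)); first lia.
- by rewrite -[cyc _ _ _ _]h01.
- by rewrite -[cyc _ _ _ _]h12.
- by rewrite -[cyc _ _ _ _]h02.
Qed.

Lemma n0 : 0 < n. Proof. lia. Qed.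
Lemma n3 : 3 <= n. Proof. lia. Qed.

Lemma yesH : in_induced_copy eF eH (Ordinal n0).
Proof.
rewrite /in_induced_copy; apply/existsP; exists [ffun i : 'I_3 => widen_ord n3 i].
apply/and3P; split.
- apply/injectiveP => i j; rewrite !ffunE => /(congr1 val) /= /val_inj //.
- apply/forallP => i; apply/forallP => j; rewrite !ffunE /eF /eH /=.
  case: i => [[|[|[|i]]] Hi] //; case: j => [[|[|[|j]]] Hj] //.
- apply/codomP; exists (@Ordinal 3 0 isT); apply: val_inj; by rewrite ffunE.
Qed.
End Main.

Theorem proposition2 :
  forall RELABEL : nat -> seq nat -> nat, relabel_injective RELABEL ->
  exists k : nat, forall n : nat, 6 <= n ->
    exists (eG eH : rel 'I_n) (eF : rel 'I_k),
      [/\ simple_graph eG /\ simple_graph eH /\ simple_graph eF,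
          ~ graph_iso eG eH,
          (forall t, ~ distinguishes_after (wl1 RELABEL eG) (wl1 RELABEL eH) t) &
          distinguishes_after (wl1F RELABEL eF eG) (wl1F RELABEL eF eH) 1].
Proof.
move=> R _; exists 3 => n Hn.
exists (eG n), (eH n), eF; split.
- split; [exact: sG|split; [exact: sH|exact: sF]].
- move=> [f Hf].
  have i0 : 0 < n by lia. have i1 : 1 < n by lia. have i2 : 2 < n by lia.
  pose x0 := (f^-1)%g (Ordinal i0); pose x1 := (f^-1)%g (Ordinal i1);
  pose x2 := (f^-1)%g (Ordinal i2).
  apply: (@cyc_tri 0 n x0 x1 x2); first lia.
  + by rewrite -[cyc _ _ _ _]/(eG n x0 x1) Hf /x0 /x1 !permKV.
  + by rewrite -[cyc _ _ _ _]/(eG n x1 x2) Hf /x1 /x2 !permKV.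
  + by rewrite -[cyc _ _ _ _]/(eG n x0 x2) Hf /x0 /x2 !permKV.
- move=> t [s [_ [c]]]; apply; rewrite /col_count; apply: eq_card => v /=.
  by rewrite !inE (@wl1_reg R n (eG n) 2 (@degG n Hn)) (@wl1_reg R n (eH n) 2 (@degH n Hn)).
- exists 0; split => //; exists 1; rewrite /col_count /wl1F /=.
  have -> : #|[pred v | nat_of_bool (in_induced_copy eF (eG n) v) == 1]| = 0.
    apply: eq_card0 => v; by rewrite inE /= (@noG n Hn).
  move=> H0.
  have : 0 < #|[pred v | nat_of_bool (in_induced_copy eF (eH n) v) == 1]|.
    apply/card_gt0P; exists (Ordinal (@n0 n Hn)); by rewrite inE /= (@yesH n Hn).
  by rewrite -H0.
Qed.
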